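(* Let $N=(P,T,F,I,O)$ be a pWF net with a place $p^*$ and a transition $t^*$ such that $p^*\bullet=\{t^*\}$, $\bullet t^*=\{p^*\}$, $p^*\notin I\cup O$, and $F\cap(\bullet p^*\times t^*\bullet)=\emptyset$. Let $M$ be the net with input set $I$ and output set $O$ obtained from $N$ by removing $p^*$, $t^*$ and all edges incident to them, and adding all edges in $\bullet p^*\times t^*\bullet$ (preset and postset taken in $N$). Then $M$ is a pWF net, and if $N$ is sub-sound then $M$ is sub-sound.
   Context: Petri nets and markings. A Petri net is a triple $(P,T,F)$ with $P$ a finite set of places, $T$ a finite set of transitions, $P\cap T=\emptyset$, and $F\subseteq (P\times T)\cup(T\times P)$. For a node $x$, $\bullet x=\{y\mid (y,x)\in F\}$, $x\bullet=\{y\mid (x,y)\in F\}$. A marking is a multiset over $P$ (a function $P\to\mathbb N$); sets of places are identified with bags of multiplicity one, $+,-,\le$ are pointwise, and $k.m$ is the sum of $k$ copies of $m$. Transition $t$ is enabled at $m$ iff $\bullet t\le m$, firing gives $m-\bullet t+t\bullet$, and $m\xrightarrow{*}m'$ denotes reachability by a finite (possibly empty) firing sequence. A pWF net is $(P,T,F,I,O)$ with $(P,T,F)$ a Petri net, $I,O\subseteq P$ non-empty (input/output places), every node reachable by a directed path from some node of $I$, and some node of $O$ reachable from every node; input places may have incoming edges and output places outgoing edges. Sub-soundness. A pWF net is sub-sound if for all integers $k\ge k'\ge 0$ and every marking $m'$: if $k.I\xrightarrow{*}m'+k'.O$ then $m'\xrightarrow{*}(k-k').O$. *)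

(* Defs.v *)
From mathcomp Require Import all_boot.
Set Implicit Arguments.
Unset Strict Implicit.
Unset Printing Implicit Defensive.

(* A Petri net (P,T,F): places P and transitions T are (disjoint) finite types;
   the flow relation F is split into its P x T part [pre] and T x P part [post]:
   (p,t) \in F <-> pre p t,   (t,p) \in F <-> post t p. *)

Definition marking (P : finType) := {ffun P -> nat}.

Definition bag (P : finType) (A : {set P}) : marking P :=
  [ffun p => nat_of_bool (p \in A)].

Definition madd (P : finType) (m1 m2 : marking P) : marking P :=
  [ffun p => m1 p + m2 p].
Definition mscale (P : finType) (k : nat) (m : marking P) : marking P :=
  [ffun p => k * m p].
Definition mle (P : finType) (m1 m2 : marking P) : Prop :=
  forall p, m1 p <= m2 p.

Definition preT (P T : finType) (pre : P -> T -> bool) (t : T) : marking P :=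
  [ffun p => nat_of_bool (pre p t)].
Definition postT (P T : finType) (post : T -> P -> bool) (t : T) : marking P :=
  [ffun p => nat_of_bool (post t p)].

Definition fire_step (P T : finType) (pre : P -> T -> bool) (post : T -> P -> bool)
  (m m' : marking P) : Prop :=
  exists t : T, mle (preT pre t) m /\
    m' = [ffun p => m p - preT pre t p + postT post t p].

Inductive reach (P T : finType) (pre : P -> T -> bool) (post : T -> P -> bool)
  : marking P -> marking P -> Prop :=
| reach_refl m : reach pre post m m
| reach_step m1 m2 m3 : fire_step pre post m1 m2 -> reach pre post m2 m3 ->
    reach pre post m1 m3.

Definition flowRel (P T : finType) (pre : P -> T -> bool) (post : T -> P -> bool)
  : rel (P + T) :=
  fun x y => match x, y with
             | inl p, inr t => pre p t
             | inr t, inl p => post t p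
             | _, _ => false
             end.

Definition pWF (P T : finType) (pre : P -> T -> bool) (post : T -> P -> bool)
  (I O : {set P}) : Prop :=
  [/\ I != set0, O != set0,
      (forall x : P + T, exists2 i, i \in I & connect (flowRel pre post) (inl i) x) &
      (forall x : P + T, exists2 o, o \in O & connect (flowRel pre post) x (inl o))].

Definition sub_sound (P T : finType) (pre : P -> T -> bool) (post : T -> P -> bool)
  (I O : {set P}) : Prop :=
  forall (k k' : nat) (m' : marking P), k' <= k ->
    reach pre post (mscale k (bag I)) (madd m' (mscale k' (bag O))) ->
    reach pre post m' (mscale (k - k') (bag O)).

Definition red_pre (P T : finType) (pre : P -> T -> bool) (ps : P) (ts : T)
  (p : {p : P | p != ps}) (t : {t : T | t != ts}) : bool :=
  pre (val p) (val t).
Definition red_post (P T : finType) (post : T -> P -> bool) (ps : P) (ts : T)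
  (t : {t : T | t != ts}) (p : {p : P | p != ps}) : bool :=
  post (val t) (val p) || (post (val t) ps && post ts (val p)).
Definition red_set (P : finType) (ps : P) (A : {set P}) : {set {p : P | p != ps}} :=
  [set p | val p \in A].
Arguments red_pre {P T} pre ps ts p t.
Arguments red_post {P T} post ps ts t p.
Arguments red_set {P} ps A.

(* Main.v *)
Require Import Defs.
From mathcomp Require Import all_boot.
From mathcomp Require Import zify.
Set Implicit Arguments.
Unset Strict Implicit.
Unset Printing Implicit Defensive.

Lemma reach_trans (P T : finType) (pre : P -> T -> bool) (post : T -> P -> bool) m1 m2 m3 :
  reach pre post m1 m2 -> reach pre post m2 m3 -> reach pre post m1 m3.
Proof.
elim=> [m //| a b c hs _ IH] h; exact: reach_step hs (IH h).
Qed.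

Lemma reach_eq (P T : finType) (pre : P -> T -> bool) (post : T -> P -> bool) m1 m2 :
  m1 = m2 -> reach pre post m1 m2.
Proof. by move=> ->; constructor. Qed.

Lemma reach_one (P T : finType) (pre : P -> T -> bool) (post : T -> P -> bool) m1 m2 :
  fire_step pre post m1 m2 -> reach pre post m1 m2.
Proof. by move=> h; apply: reach_step h _; constructor. Qed.

Fact emb_key : unit. Proof. by []. Qed.
Definition emb_def (P : finType) (ps : P) (m : marking {p : P | p != ps}) : marking P :=
  [ffun p => if @insub _ (fun p => p != ps) _ p is Some q then m q else 0].
Definition emb := locked_with emb_key emb_def.
Arguments emb {P ps}.

Lemma embE_ne (P : finType) (ps : P) (m : marking {p : P | p != ps}) p (hp : p != ps) :
  emb m p = m (exist _ p hp).
Proof. by rewrite /emb unlock /emb_def ffunE (insubT (fun p => p != ps) hp). Qed.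

Lemma embE_ps (P : finType) (ps : P) (m : marking {p : P | p != ps}) :
  emb m ps = 0.
Proof. by rewrite /emb unlock /emb_def ffunE insubF // eqxx. Qed.

Definition proj (P T : finType) (post : T -> P -> bool) (ps : P) (ts : T) (n : marking P)
  : marking {p : P | p != ps} :=
  [ffun q => n (val q) + n ps * post ts (val q)].

Lemma sim_MN (P T : finType) (pre : P -> T -> bool) (post : T -> P -> bool) (ps : P) (ts : T)
  (hps : forall t : T, pre ps t = (t == ts))
  (hts : forall p : P, pre p ts = (p == ps))
  (hdis : forall (t : T) (p : P), post t ps -> post ts p -> ~~ post t p)
  (m m2 : marking {p : P | p != ps}) :
  fire_step (red_pre pre ps ts) (red_post post ps ts) m m2 -> reach pre post (emb m) (emb m2).
Proof.
have postts_ps : post ts ps = false.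
  by apply/negbTE/negP => h; move: (hdis _ _ h h); rewrite h.
case=> [[t ht] [hen ->]] /=.
have pre_ps : pre ps t = false by rewrite hps (negbTE ht).
have hen' : mle (preT pre t) (emb m).
  move=> p; rewrite /preT ffunE; case: (eqVneq p ps) => [->|hp]; first by rewrite pre_ps.
  rewrite (embE_ne _ hp); move: (hen (exist _ p hp)); by rewrite /preT ffunE /red_pre.
case hp: (post t ps).
- apply: reach_step; first by exists t; split; [exact: hen' | reflexivity].
  apply: reach_step; first (exists ts; split; [ | reflexivity]).
    move=> p; rewrite /preT /postT !ffunE hts; case: eqVneq => [->|] //.
    by rewrite pre_ps hp embE_ps.
  apply: reach_eq; apply/ffunP => p; rewrite /preT /postT !ffunE.
  case: (eqVneq p ps) => [->|hp'].
    by rewrite !embE_ps pre_ps hp postts_ps hts eqxx.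
  rewrite !(embE_ne _ hp') !ffunE /red_pre /red_post /= hp hts (negbTE hp').
  move: (hdis t p hp); case: (post t p); case: (post ts p) => //= h; rewrite ?subn0 ?addn0 ?addn1; try lia; by have := h isT isT.
- apply: reach_one; exists t; split; first exact: hen'.
  apply/ffunP => p; rewrite /preT /postT !ffunE.
  case: (eqVneq p ps) => [->|hp'].
    by rewrite !embE_ps pre_ps hp.
  by rewrite !(embE_ne _ hp') !ffunE /red_pre /red_post /= hp orbF.
Qed.

Lemma sim_NM (P T : finType) (pre : P -> T -> bool) (post : T -> P -> bool) (ps : P) (ts : T)
  (hps : forall t : T, pre ps t = (t == ts))
  (hts : forall p : P, pre p ts = (p == ps))
  (hdis : forall (t : T) (p : P), post t ps -> post ts p -> ~~ post t p)
  (n n2 : marking P) :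
  fire_step pre post n n2 ->
  reach (red_pre pre ps ts) (red_post post ps ts) (proj post ps ts n) (proj post ps ts n2).
Proof.
have postts_ps : post ts ps = false.
  by apply/negbTE/negP => h; move: (hdis _ _ h h); rewrite h.
case=> t [hen ->]; case: (eqVneq t ts) hen => [->|ht] hen.
  apply: reach_eq; apply/ffunP => -[q hq]; rewrite /proj /preT /postT !ffunE /=.
  move: (hen ps); rewrite /preT ffunE !hts eqxx (negbTE hq) postts_ps /=.
  case: (post ts q) => /=; lia.
apply: reach_one; exists (exist _ t ht); split.
  move=> [q hq]; rewrite /proj /preT !ffunE /red_pre /=.
  move: (hen q); rewrite /preT ffunE; lia.
apply/ffunP => -[q hq]; rewrite /proj /preT /postT !ffunE /red_pre /red_post /=.
rewrite hps (negbTE ht).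
move: (hen q) (hdis t q); rewrite /preT ffunE.
case: (pre q t); case: (post t q); case: (post t ps); case: (post ts q) => //= h1 h2;
  try (by have := h2 isT isT); lia.
Qed.

Lemma connect_fwd (X : finType) (e : rel X) (Q : X -> Prop) x :
  Q x -> (forall y z, Q y -> e y z -> Q z) -> forall y, connect e x y -> Q y.
Proof.
move=> Qx H y /connectP [p pth ->].
elim: p x Qx pth => [|a p IH] x Qx //= /andP [exa pth].
exact: IH (H _ _ Qx exa) pth.
Qed.

Lemma connect_bwd (X : finType) (e : rel X) (Q : X -> Prop) y :
  Q y -> (forall x z, e x z -> Q z -> Q x) -> forall x, connect e x y -> Q x.
Proof.
move=> Qy H x /connectP [p pth E]; rewrite E in Qy.
elim: p x Qy pth {E} => [|a p IH] x Qy //= /andP [exa pth].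
exact: H exa (IH _ Qy pth).
Qed.

Lemma reach_MN (P T : finType) (pre : P -> T -> bool) (post : T -> P -> bool) (ps : P) (ts : T)
  (hps : forall t : T, pre ps t = (t == ts))
  (hts : forall p : P, pre p ts = (p == ps))
  (hdis : forall (t : T) (p : P), post t ps -> post ts p -> ~~ post t p)
  (m m2 : marking {p : P | p != ps}) :
  reach (red_pre pre ps ts) (red_post post ps ts) m m2 -> reach pre post (emb m) (emb m2).
Proof.
elim=> [m0|a b c hs _ IH]; first by constructor.
exact: reach_trans (sim_MN hps hts hdis hs) IH.
Qed.

Lemma reach_NM (P T : finType) (pre : P -> T -> bool) (post : T -> P -> bool) (ps : P) (ts : T)
  (hps : forall t : T, pre ps t = (t == ts))
  (hts : forall p : P, pre p ts = (p == ps))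
  (hdis : forall (t : T) (p : P), post t ps -> post ts p -> ~~ post t p)
  (n n2 : marking P) :
  reach pre post n n2 ->
  reach (red_pre pre ps ts) (red_post post ps ts) (proj post ps ts n) (proj post ps ts n2).
Proof.
elim=> [m0|a b c hs _ IH]; first by constructor.
exact: reach_trans (sim_NM hps hts hdis hs) IH.
Qed.

Definition embN (P T : finType) (ps : P) (ts : T)
  (x : {p : P | p != ps} + {t : T | t != ts}) : P + T :=
  match x with inl q => inl (val q) | inr t => inr (val t) end.

Theorem mainTheorem12 (P T : finType) (pre : P -> T -> bool) (post : T -> P -> bool)
  (I O : {set P}) (ps : P) (ts : T) :
  pWF pre post I O ->
  (forall t : T, pre ps t = (t == ts)) ->
  (forall p : P, pre p ts = (p == ps)) ->
  ps \notin I :|: O ->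
  (forall (t : T) (p : P), post t ps -> post ts p -> ~~ post t p) ->
  pWF (red_pre pre ps ts) (red_post post ps ts) (red_set ps I) (red_set ps O) /\
  (sub_sound pre post I O ->
   sub_sound (red_pre pre ps ts) (red_post post ps ts) (red_set ps I) (red_set ps O)).
Proof.
move=> hwf hps hts hnIO hdis.
have postts_ps : post ts ps = false.
  by apply/negbTE/negP => h; move: (hdis _ _ h h); rewrite h.
have psI : ps \notin I by move: hnIO; rewrite in_setU negb_or => /andP[].
have psO : ps \notin O by move: hnIO; rewrite in_setU negb_or => /andP[].
split; last first.
  move=> hss k k' m' hk hr.
  have hrN := reach_MN hps hts hdis hr.
  rewrite (_ : emb (mscale k (bag (red_set ps I))) = mscale k (bag I)) in hrN; last first.
    apply/ffunP => p; case: (eqVneq p ps) => [->|hp].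
      by rewrite embE_ps /mscale /bag !ffunE (negbTE psI) muln0.
    by rewrite (embE_ne _ hp) /mscale /bag !ffunE /red_set inE.
  rewrite (_ : emb (madd m' (mscale k' (bag (red_set ps O)))) =
               madd (emb m') (mscale k' (bag O))) in hrN; last first.
    apply/ffunP => p; case: (eqVneq p ps) => [->|hp].
      by rewrite !embE_ps /madd /mscale /bag !ffunE (negbTE psO) muln0 embE_ps.
    by rewrite !(embE_ne _ hp) /madd /mscale /bag !ffunE /red_set inE (embE_ne _ hp).
  have := reach_NM hps hts hdis (hss k k' (emb m') hk hrN).
  rewrite (_ : proj post ps ts (emb m') = m'); last first.
    by apply/ffunP => -[q hq]; rewrite /proj ffunE embE_ps (embE_ne _ hq) /= mul0n addn0.
  rewrite (_ : proj post ps ts (mscale (k - k') (bag O)) = mscale (k - k') (bag (red_set ps O))) //.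
  apply/ffunP => -[q hq]; rewrite /proj /mscale /bag !ffunE /red_set inE (negbTE psO) /=.
  by rewrite muln0 mul0n addn0.
case: hwf => hI hO hin hout.
have Inn : forall i, i \in I -> i != ps by move=> i hi; apply/eqP => E; rewrite -E hi in psI.
have Onn : forall i, i \in O -> i != ps by move=> i hi; apply/eqP => E; rewrite -E hi in psO.
split.
- case/set0Pn: hI => i hi; apply/set0Pn; exists (exist _ i (Inn i hi)); by rewrite inE.
- case/set0Pn: hO => i hi; apply/set0Pn; exists (exist _ i (Onn i hi)); by rewrite inE.
- move=> x; case: (hin (embN x)) => i hi hc.
  exists (exist _ i (Inn i hi)); first by rewrite inE.
  set i' := exist _ i (Inn i hi).
  have := connect_fwd (Q := fun y => (forall x, embN x = y ->
       connect (flowRel (red_pre pre ps ts) (red_post post ps ts)) (inl i') x) /\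
     ((y = inl ps \/ y = inr ts) -> exists2 t : {t : T | t != ts}, post (val t) ps &
       connect (flowRel (red_pre pre ps ts) (red_post post ps ts)) (inl i') (inr t))) _ _ hc.
  case=> [| y z [H1 H2] hyz | H1 _]; last exact: H1.
    split.
      move=> [[q hq]|[u hu]] //= [E]; subst q.
      by rewrite (_ : exist _ i hq = i') //; apply: val_inj.
    case=> // -[E]; by move: (Inn i hi); rewrite E eqxx.
  move: y z hyz H1 H2 => [p|t] [p'|t'] //= hyz H1 H2.
    split.
      move=> [[q hq]|[u hu]] //= [E]; subst t'.
      case: (eqVneq p ps) => [Ep|hp].
        by rewrite Ep hps in hyz; exact: (False_ind _ (negP hu hyz)).
      apply: connect_trans (H1 (inl (exist _ p hp)) erefl) (connect1 _).
      by rewrite /= /red_pre /=.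
    case=> // -[E]; subst t'.
    rewrite hts in hyz; move/eqP: hyz => Ep; subst; apply: H2; by left.
  split.
    move=> [[q hq]|[u hu]] //= [E]; subst p'.
    case: (eqVneq t ts) => [Et|ht].
      subst t; case: (H2 (or_intror erefl)) => t0 h0 hc0.
      apply: connect_trans hc0 (connect1 _).
      by rewrite /= /red_post /= h0 hyz orbT.
    apply: connect_trans (H1 (inr (exist _ t ht)) erefl) (connect1 _).
    by rewrite /= /red_post hyz.
  case=> // -[E]; subst p'.
  case: (eqVneq t ts) => [Et|ht]; first by rewrite Et postts_ps in hyz.
  by exists (exist _ t ht) => //; apply: (H1 (inr (exist _ t ht))).
- move=> x; case: (hout (embN x)) => o ho hc.
  exists (exist _ o (Onn o ho)); first by rewrite inE.
  set o' := exist _ o (Onn o ho).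
  have := connect_bwd (Q := fun y => (forall x, embN x = y ->
       connect (flowRel (red_pre pre ps ts) (red_post post ps ts)) x (inl o')) /\
     ((y = inl ps \/ y = inr ts) -> exists2 q : {p : P | p != ps}, post ts (val q) &
       connect (flowRel (red_pre pre ps ts) (red_post post ps ts)) (inl q) (inl o'))) _ _ hc.
  case=> [| y z hyz [H1 H2] | H1 _]; last exact: H1.
    split.
      move=> [[q hq]|[u hu]] //= [E]; subst q.
      by rewrite (_ : exist _ o hq = o') //; apply: val_inj.
    case=> // -[E]; by move: (Onn o ho); rewrite E eqxx.
  move: y z hyz H1 H2 => [p|t] [p'|t'] //= hyz H1 H2.
    split.
      move=> [[q hq]|[u hu]] //= [E]; subst p.
      case: (eqVneq t' ts) => [Et|ht].
        by rewrite Et hts in hyz; exact: (False_ind _ (negP hq hyz)).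
      apply: connect_trans (connect1 _) (H1 (inr (exist _ t' ht)) erefl).
      by rewrite /= /red_pre /=.
    case=> // -[E]; subst p.
    rewrite hps in hyz; move/eqP: hyz => Ep; subst; apply: H2; by right.
  split.
    move=> [[q hq]|[u hu]] //= [E]; subst t.
    case: (eqVneq p' ps) => [Ep|hp].
      subst p'; case: (H2 (or_introl erefl)) => q0 h0 hc0.
      apply: connect_trans (connect1 _) hc0.
      by rewrite /= /red_post /= hyz h0 orbT.
    apply: connect_trans (connect1 _) (H1 (inl (exist _ p' hp)) erefl).
    by rewrite /= /red_post hyz.
  case=> // -[E]; subst t.
  case: (eqVneq p' ps) => [Ep|hp]; first by rewrite Ep postts_ps in hyz.
  by exists (exist _ p' hp) => //; apply: (H1 (inl (exist _ p' hp))).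
Qed.
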